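(* Let $\mathcal T$ be a trie with $n$ nodes over an alphabet $\Sigma$ of size $\sigma$, and consider the block representation of its bitvectors $B_c$ described in the context. This representation supports full rank queries $\mathrm{rank}(i,B_c)$, for every $c\in\Sigma$ and every $i\in[n]$, in $O(\log\sigma+\log\log n)$ time.
   Context: Word-RAM model with word size $\Theta(\log n)$. A trie over a finite totally ordered alphabet $\Sigma$ is a rooted ordered tree with edges labeled by symbols of $\Sigma$ such that edges leaving the same node have distinct labels and siblings are ordered by their incoming labels; $out(u)$ is the set of labels of edges leaving $u$. Strings are compared co-lexicographically (from right to left, $\epsilon$ smallest). Let $u_1,\dots,u_n$ be the nodes sorted co-lexicographically by the string labeling the path from the root to them. For $c\in\Sigma$, $B_c$ is the bitvector of length $n$ with $B_c[i]=1$ iff $c\in out(u_i)$. For a bitvector $B$, $\mathrm{rank}(i,B)$ is the number of ones in $B[1..i]$, $\mathrm{prank}(i,B)=\mathrm{rank}(i,B)$ if $B[i]=1$ and $-1$ otherwise, and $\mathrm{select}(j,B)$ is the position of the $j$-th one. An indexable dictionary (ID) for a bitvector of length $m$ with $x$ ones is the representation of Raman, Raman and Rao using at most $\log\binom{m}{x}+o(x)+O(\log\log m)$ bits and supporting select and partial rank in $O(1)$ time. The block representation: with $b=\lceil\sigma\log^2 n\rceil$ and $t=\lceil n/b\rceil$, each $B_c$ is split into consecutive blocks $B_c^1,\dots,B_c^t$ of length $b$ (the last possibly shorter); each block containing at least one 1 is stored as an ID; a $\sigma\times t$ table stores pointers to these IDs; a table $R[c][i]=\mathrm{rank}(b(i-1),B_c)$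 is stored; the array $C[c]=1+\sum_{c'\prec c}n_{c'}$ is stored, where $n_{c'}$ is the number of edges labeled $c'$; and the bitvector $S=S_{c_1}\cdots S_{c_\sigma}$ (characters in increasing order), with $S_c=1^{x_c^1}0\,1^{x_c^2}0\cdots1^{x_c^t}0$ where $x_c^i$ is the number of ones in $B_c^i$, is stored as an ID. *)

(* Defs.v *)
From Stdlib Require Import Reals.
From mathcomp Require Import all_boot.
Set Implicit Arguments. Unset Strict Implicit. Unset Printing Implicit Defensive.

(* Alphabet Sigma = {0,...,sigma-1} with the usual order on nat.      *)
(* Strings are seq nat.  A trie is represented by the set of strings   *)
(* labelling root-to-node paths (a bijection with its nodes), given as *)
(* the list u_1,...,u_n of these strings sorted co-lexicographically. *)

Fixpoint lexlt (s t : seq nat) : bool :=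
  match s, t with
  | _, [::] => false
  | [::], _ :: _ => true
  | a :: s', b :: t' => (a < b) || ((a == b) && lexlt s' t')
  end.

Definition colex_lt (s t : seq nat) : bool := lexlt (rev s) (rev t).

Definition is_trie (sigma : nat) (T : seq (seq nat)) : Prop :=
  [/\ [::] \in T,
      (forall u a, rcons u a \in T -> u \in T),
      (forall u, u \in T -> all (fun a => a < sigma) u)
    & sorted colex_lt T].

(* B_c[p] for p in 1..n : c \in out(u_p) *)
Definition Bbit (T : seq (seq nat)) (c p : nat) : bool :=
  (0 < p <= size T) && (rcons (nth [::] T p.-1) c \in T).

Definition rankB (T : seq (seq nat)) (c i : nat) : nat :=
  count (Bbit T c) (iota 1 i).

(* b = ceil(sigma * log2(n)^2) *)
Definition is_blocklen (sigma n b : nat) : Prop :=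
  Rlt (Rminus (INR b) 1) (Rmult (INR sigma) (pow (Rdiv (ln (INR n)) (ln 2)) 2))
  /\ Rle (Rmult (INR sigma) (pow (Rdiv (ln (INR n)) (ln 2)) 2)) (INR b).

(* t = ceil(n / b) *)
Definition nblocks (n b : nat) : nat := (n + b).-1 %/ b.

Definition blkbit (T : seq (seq nat)) (b c k j : nat) : bool :=
  [&& 0 < k, 0 < j, j <= b & Bbit T c (b * k.-1 + j)].

Definition blk_ones T b c k := count (blkbit T b c k) (iota 1 b).

(* select(j, B) on a bitvector of length len given by bits (1-based);
   returns 0 when j = 0 or j exceeds the number of ones *)
Definition sel (bits : nat -> bool) (len j : nat) : nat :=
  if j == 0 then 0 else nth 0 [seq p <- iota 1 len | bits p] j.-1.

(* partial rank; the value -1 is encoded by 0 (a genuine answer is >= 1) *)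
Definition prank (bits : nat -> bool) (p : nat) : nat :=
  if bits p then count bits (iota 1 p) else 0.

Definition Rtab T b c k : nat :=
  if (0 < k) && (k <= nblocks (size T) b) then rankB T c (b * k.-1) else 0.

Definition nedges (T : seq (seq nat)) (c : nat) : nat :=
  count (fun u => rcons u c \in T) T.

Definition Ctab (sigma : nat) T c : nat :=
  if c < sigma then (sumn [seq nedges T c' | c' <- iota 0 c]).+1 else 0.

Definition Sseq (sigma : nat) T b : seq bool :=
  flatten [seq flatten [seq rcons (nseq (blk_ones T b c k) true) false
                       | k <- iota 1 (nblocks (size T) b)]
          | c <- iota 0 sigma].

Definition Sbit (s : seq bool) (p : nat) : bool := (0 < p) && nth false s p.-1.

(* The O(1)-time operations offered by the block representation.     *)
Inductive qkind : Type :=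
| QR
| QC
| QPtr      (* 1 iff the pointer to the ID of B_c^k is non-null     *)
| QSel
| QPrank
| QSSel
| QSPrank.

Definition oracle (sigma : nat) (T : seq (seq nat)) (b : nat)
    (q : qkind) (x y z : nat) : nat :=
  match q with
  | QR => Rtab T b x y
  | QC => Ctab sigma T x
  | QPtr => has (blkbit T b x y) (iota 1 b)
  | QSel => sel (blkbit T b x y) b z
  | QPrank => prank (blkbit T b x y) z
  | QSSel => sel (Sbit (Sseq sigma T b)) (size (Sseq sigma T b)) x
  | QSPrank => prank (Sbit (Sseq sigma T b)) x
  end.

(* A word RAM with w-bit words: registers indexed by nat, unit-cost   *)
(* instructions, results reduced modulo 2^w.                          *)
Inductive instr : Type :=
| Iconst (d k : nat)
| Iadd (d a b : nat)
| Isub (d a b : nat)          (* truncated subtraction *)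
| Imul (d a b : nat)
| Idiv (d a b : nat)          (* x / 0 = 0 *)
| Ilt (d a b : nat)
| Ieq (d a b : nat)
| Ijz (a l : nat)
| Ijmp (l : nat)
| Iq (q : qkind) (d a1 a2 a3 : nat)
| Ihalt.

Definition upd (w : nat) (rg : nat -> nat) (d v : nat) : nat -> nat :=
  fun r => if r == d then v %% 2 ^ w else rg r.

(* run for at most fuel steps (each executed instruction, including
   halt, costs one step); Some rg if the program halts in time *)
Fixpoint run (w : nat) (orc : qkind -> nat -> nat -> nat -> nat)
    (P : seq instr) (fuel pc : nat) (rg : nat -> nat) : option (nat -> nat) :=
  match fuel with
  | 0 => None
  | f.+1 =>
    match nth Ihalt P pc with
    | Ihalt => Some rg
    | Iconst d k => run w orc P f pc.+1 (upd w rg d k)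
    | Iadd d a b => run w orc P f pc.+1 (upd w rg d (rg a + rg b))
    | Isub d a b => run w orc P f pc.+1 (upd w rg d (rg a - rg b))
    | Imul d a b => run w orc P f pc.+1 (upd w rg d (rg a * rg b))
    | Idiv d a b => run w orc P f pc.+1 (upd w rg d (rg a %/ rg b))
    | Ilt d a b => run w orc P f pc.+1 (upd w rg d (rg a < rg b))
    | Ieq d a b => run w orc P f pc.+1 (upd w rg d (rg a == rg b))
    | Ijz a l => run w orc P f (if rg a == 0 then l else pc.+1) rg
    | Ijmp l => run w orc P f l rg
    | Iq q d a1 a2 a3 =>
        run w orc P f pc.+1 (upd w rg d (orc q (rg a1) (rg a2) (rg a3)))
    end
  end.

Definition init_regs (w c i n sigma b : nat) : nat -> nat :=
  fun r => nth 0 [:: c; i; n; sigma; b; nblocks n b] r %% 2 ^ w.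

(* Main.v *)
Require Import Defs.
From Stdlib Require Import Reals.
From mathcomp Require Import all_boot.
From Stdlib Require Import Lra FunctionalExtensionality.
From mathcomp Require Import zify.
Set Implicit Arguments. Unset Strict Implicit.

Definition prog : seq instr := [::
 Iconst 6 1; Ieq 7 5 6; Ijz 7 4; Imul 4 1 6;
 Isub 7 1 6; Idiv 8 7 4; Imul 7 8 4; Isub 9 1 7; Iadd 8 8 6;
 Iq QR 18 0 8 8; Iconst 10 0; Imul 11 9 6;
 Ilt 7 10 11; Ijz 7 29; Isub 12 11 10; Iadd 7 6 6; Idiv 12 12 7;
 Iadd 12 12 6; Iadd 12 12 10; Iq QSel 13 0 8 12; Iq QPrank 14 0 8 13;
 Ilt 15 9 13; Ilt 16 14 12; Iadd 15 15 16; Ijz 15 27; Isub 11 12 6;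
 Ijmp 12; Imul 10 12 6; Ijmp 12; Iadd 0 18 10; Ihalt].

Definition step1 w orc (i : instr) f pc (rg : nat -> nat) :=
    match i with
    | Ihalt => Some rg
    | Iconst d k => run w orc prog f pc.+1 (upd w rg d k)
    | Iadd d a b => run w orc prog f pc.+1 (upd w rg d (rg a + rg b))
    | Isub d a b => run w orc prog f pc.+1 (upd w rg d (rg a - rg b))
    | Imul d a b => run w orc prog f pc.+1 (upd w rg d (rg a * rg b))
    | Idiv d a b => run w orc prog f pc.+1 (upd w rg d (rg a %/ rg b))
    | Ilt d a b => run w orc prog f pc.+1 (upd w rg d (rg a < rg b))
    | Ieq d a b => run w orc prog f pc.+1 (upd w rg d (rg a == rg b))
    | Ijz a l => run w orc prog f (if rg a == 0 then l else pc.+1) rg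
    | Ijmp l => run w orc prog f l rg
    | Iq q d a1 a2 a3 =>
        run w orc prog f pc.+1 (upd w rg d (orc q (rg a1) (rg a2) (rg a3)))
    end.

Lemma run_succ w orc f pc rg : run w orc prog f.+1 pc rg = step1 w orc (nth Ihalt prog pc) f pc rg.
Proof. by []. Qed.



Definition mk (rg0 : nat -> nat) (l : seq nat) : nat -> nat := fun r => nth (rg0 r) l r.

Lemma upd_mk w rg0 l d v : d < size l ->
  upd w (mk rg0 l) d v = mk rg0 (set_nth 0 l d (v %% 2^w)).
Proof.
move=> Hd; apply: functional_extensionality => r; rewrite /upd /mk.
move: (rg0 r) (v %% 2^w) => x0 v'.
elim: l d r Hd => [//|x l IH] [|d] [|r] //= Hd.
exact: IH.
Qed.

Lemma mkE rg0 l r : mk rg0 l r = nth (rg0 r) l r. Proof. by []. Qed.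
Lemma bm w (b : bool) : 0 < w -> b %% 2^w = b.
Proof. move=> w0; apply: modn_small; case: b => //=; [exact: (leq_ltn_trans w0 (ltn_expl w (ltnSn 1))) | by rewrite expn_gt0]. Qed.

Lemma jzF : (nat_of_bool false == 0) = true. Proof. by []. Qed.
Lemma jzT : (nat_of_bool true == 0) = false. Proof. by []. Qed.
Ltac st := rewrite run_succ; cbn [step1 nth prog]; rewrite ?mkE; cbn [nth]; rewrite ?upd_mk //; cbn [set_nth nth];
  rewrite ?bm //; rewrite ?jzF ?jzT; try lia.
Lemma loop (w : nat) (orc : qkind -> nat -> nat -> nat -> nat) (c k j R r : nat) (rg0 : nat -> nat)
 (w1 : 0 < w) (w2 : 2 <= w) (jw : j < 2^w) (rj : r <= j) (Rw : R + r < 2^w)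
 (Hs : forall m, 0 < m <= j ->
   (((j < orc QSel c k m %% 2^w) + (orc QPrank c k (orc QSel c k m %% 2^w) %% 2^w < m)) %% 2^w == 0) = (m <= r))
 e : forall lo hi f a1 a2 a3 a4 a5 a7 a12 a13 a14 a15 a16 a17,
  lo <= r <= hi -> hi <= j -> hi - lo < 2^e ->
  exists rg', run w orc prog (15*e + 4 + f) 12 (mk rg0 [:: c; a1; a2; a3; a4; a5; 1; a7; k; j; lo; hi; a12; a13; a14; a15; a16; a17; R])
   = Some rg' /\ rg' 0 = R + r.
Proof.
elim: e => [|e IH] lo hi f a1 a2 a3 a4 a5 a7 a12 a13 a14 a15 a16 a17 Hr Hj Hd.
  have -> : 15*0+4+f = f.+4 by lia.
  st. have -> : (lo < hi) = false by lia.
  st. st. st. eexists; split; first reflexivity. rewrite mkE /=. have -> : lo = r by lia. exact: modn_small.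
have [lh|hl] := ltnP lo hi; last first.
  have -> : 15*e.+1+4+f = (15*e+15+f).+4 by lia.
  st. have -> : (lo < hi) = false by lia.
  st. st. st. eexists; split; first reflexivity. rewrite mkE /=. have -> : lo = r by lia. exact: modn_small.
have -> : 15*e.+1+4+f = (15*e+4+f).+4.+4.+4.+3 by lia.
have W2 : 2 < 2^w by exact: leq_ltn_trans w2 (ltn_expl _ (ltnSn 1)).
st. rewrite lh. st. st. rewrite (@modn_small (hi - lo)); last by lia.
st. rewrite (@modn_small 2) //. st. st. st.
set m := (hi - lo) %/ 2 + 1 + lo.
have Hm : lo < m <= hi by rewrite /m; lia.
rewrite (_ : ((((hi - lo) %/ 2) %% 2 ^ w + 1) %% 2 ^ w + lo) %% 2 ^ w = m); last first.
  rewrite (@modn_small ((hi - lo) %/ 2)); last by lia.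
  rewrite (@modn_small ((hi - lo) %/ 2 + 1)); last by lia.
  rewrite modn_small //; lia.
st. st. st. st. st. st. rewrite Hs; last by lia.
rewrite expnS in Hd.
have [Hmr|Hmr] := leqP m r.
  st. st. rewrite (@modn_small (m * 1)); last by lia.
  rewrite muln1. apply: IH; lia.
st. st. rewrite (@modn_small (m - 1)); last by lia.
apply: IH; lia.
Qed.

Lemma count_prefix (f : nat -> bool) s j : s <= j -> count f (iota 1 s) <= count f (iota 1 j).
Proof.
move=> sj; rewrite -(subnKC sj) iotaD count_cat; exact: leq_addr.
Qed.

Lemma sel_prop (f : nat -> bool) b j m : j <= b -> 0 < m <= count f (iota 1 j) ->
  let s := sel f b m in [/\ 0 < s, s <= j, f s & m <= count f (iota 1 s)].
Proof.
move=> jb /andP[m0 mr] s.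
have cE : forall s, count (fun p => f p) s = count f s by [].
have Es : s = nth 0 [seq p <- iota 1 j | f p] (m - 1).
  rewrite /s /sel; have -> : (m == 0) = false by lia.
  rewrite -(subnKC jb) iotaD filter_cat nth_cat size_filter.
  by rewrite -subn1 ifT // cE; lia.
have Hin : s \in [seq p <- iota 1 j | f p].
  by rewrite Es mem_nth // size_filter cE; lia.
move: Hin; rewrite mem_filter mem_iota => /andP[fs /andP[s1 s2]].
have sj : s <= j by lia.
split => //.
move: Es; rewrite -(subnKC sj) iotaD filter_cat nth_cat size_filter cE.
case: ifP => [Hlt _|Hge]; first lia.
have [Hlt2|Hge2] := ltnP (m - 1 - count f (iota 1 s)) (size [seq p <- iota (1 + s) (j - s) | f p]).
  move=> E.
  have : s \in [seq p <- iota (1 + s) (j - s) | f p] by rewrite {1}E mem_nth.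
  rewrite mem_filter mem_iota; lia.
by rewrite nth_default //; lia.
Qed.

Lemma rank_split T c b q j : j <= b ->
  rankB T c (b * q + j) = rankB T c (b * q) + count (blkbit T b c q.+1) (iota 1 j).
Proof.
move=> jb; rewrite /rankB iotaD count_cat; congr addn.
rewrite addnC iotaDl count_map; apply: eq_in_count => p.
rewrite mem_iota /blkbit /= => Hp.
have -> : p <= b by lia.
have -> : 0 < p by lia.
by [].
Qed.

Lemma INR_expn k : INR (2 ^ k) = pow 2 k.
Proof.
elim: k => [|k IH]; first by rewrite expn0.
rewrite expnS mult_INR IH /=; lra.
Qed.

Lemma INR_ltn a b : a < b -> Rlt (INR a) (INR b).
Proof. by move/ltP; apply: lt_INR. Qed.

Lemma blen s n b : 2 <= n -> 0 < s -> is_blocklen s n b ->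
  0 < b /\ b <= s * (trunc_log 2 n).+1 * (trunc_log 2 n).+1.
Proof.
move=> n2 s0 [H1 H2].
set L := trunc_log 2 n.
have hn : n < 2 ^ L.+1 by apply: trunc_log_ltn.
have ln2 : Rlt 0 (ln 2) by have := ln_lt_2; lra.
have Rn : Rle 2 (INR n) by have := le_INR 2 n (elimT leP n2); rewrite /=; lra.
set x := Rdiv (ln (INR n)) (ln 2) in H1 H2.
have ex : Rmult x (ln 2) = ln (INR n) by rewrite /x; field; lra.
have x1 : Rle 1 x.
  have : Rle (ln 2) (ln (INR n)).
    case: (Rle_lt_or_eq_dec _ _ Rn) => h; last by rewrite -h; lra.
    by apply: Rlt_le; apply: ln_increasing; lra.
  move=> h; nra.
have xL : Rlt x (INR L.+1).
  have : Rlt (ln (INR n)) (Rmult (INR L.+1) (ln 2)).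
    rewrite -ln_pow; last lra.
    apply: ln_increasing; first lra.
    by rewrite -INR_expn; apply: INR_ltn.
  move=> h; nra.
have Rs : Rle 1 (INR s) by have := le_INR 1 s (elimT leP s0); rewrite /=; lra.
split.
  have : Rlt 0 (INR b).
    apply: Rlt_le_trans H2.
    have : Rle 1 (pow x 2) by rewrite /=; nra.
    nra.
  by move=> h; apply/ltP; apply: INR_lt; rewrite /=.
have : Rlt (INR b) (INR (s * L.+1 * L.+1) + 1).
  rewrite !mult_INR.
  have : Rle (pow x 2) (Rmult (INR L.+1) (INR L.+1)).
    replace (pow x 2) with (Rmult x x) by (simpl; ring).
    apply: Rmult_le_compat; lra.
  have : Rle 0 (INR s) by lra.
  move=> h1 h2; nra.
move=> h.
have : Rlt (INR b) (INR (s * L.+1 * L.+1).+1) by rewrite S_INR.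
move/INR_lt/ltP; lia.
Qed.
Lemma logb s L b : 0 < b -> b <= s * L.+1 * L.+1 -> 
  trunc_log 2 b < trunc_log 2 s + 2 * trunc_log 2 L + 3.
Proof.
move=> b0 hb.
have hs : s < 2 ^ (trunc_log 2 s).+1 by apply: trunc_log_ltn.
have hL : L < 2 ^ (trunc_log 2 L).+1 by apply: trunc_log_ltn.
have hb2 : 2 ^ trunc_log 2 b <= b by apply: trunc_logP.
rewrite -(@ltn_exp2l 2) //.
apply: leq_ltn_trans hb2 _; apply: leq_ltn_trans hb _.
have -> : trunc_log 2 s + 2 * trunc_log 2 L + 3 = (trunc_log 2 s).+1 + (trunc_log 2 L).+1 + (trunc_log 2 L).+1 by lia.
rewrite !expnD.
apply: (@leq_ltn_trans (s * 2 ^ (trunc_log 2 L).+1 * 2 ^ (trunc_log 2 L).+1)).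
  by rewrite leq_mul // leq_mul.
rewrite ltn_pmul2r ?expn_gt0 // ltn_pmul2r ?expn_gt0 //.
Qed.

Theorem proposition2 :
  exists P : seq instr, forall A : nat, exists K : nat,
  forall (sigma : nat) (T : seq (seq nat)) (b w c i : nat),
    is_trie sigma T ->
    2 <= size T ->
    is_blocklen sigma (size T) b ->
    size T < 2 ^ w -> sigma < 2 ^ w -> w <= A * trunc_log 2 (size T) ->
    c < sigma -> 1 <= i <= size T ->
    exists rg : nat -> nat,
      run w (oracle sigma T b) P
          (K * (trunc_log 2 sigma + trunc_log 2 (trunc_log 2 (size T)) + 1))
          0 (init_regs w c i (size T) sigma b) = Some rg
      /\ rg 0 = rankB T c i.
Proof.
exists prog => A; exists 61 => s T b w c i Htr Hn Hb Hnw Hsw _ Hc /andP[i1 iN].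
set n := size T in Hn Hb Hnw iN *.
have s0 : 0 < s by lia.
have [b0 bB] := blen Hn s0 Hb.
have w2 : 2 <= w.
  case: w Hnw Hsw => [|[|w']] //; rewrite ?expn0 ?expn1 => h; lia.
have w1 : 0 < w by lia.
have W2 : 2 < 2^w by exact: leq_ltn_trans w2 (ltn_expl _ (ltnSn 1)).
set t := nblocks n b.
have tb : t * b <= (n + b).-1 by rewrite /t /nblocks leq_trunc_div.
have tn : t <= n by nia.
have tb2 : (n + b).-1 < b + t * b by rewrite -mulSn /t /nblocks ltn_ceil.
have t0 : 0 < t by rewrite /t /nblocks divn_gt0 //; lia.
set q := (i - 1) %/ b.
have qb : q * b <= i - 1 by rewrite /q leq_trunc_div.
have qb2 : i - 1 < b + q * b by rewrite -mulSn /q ltn_ceil.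
set j := i - q * b.
have j1 : 0 < j by rewrite /j; lia.
have jb : j <= b by rewrite /j; lia.
have kt : q + 1 <= t by rewrite /t /nblocks leq_divRL // addn1 mulSn; lia.
set e := (trunc_log 2 b).+1.
have he : 15 * e + 16 <= 61 * (trunc_log 2 s + trunc_log 2 (trunc_log 2 n) + 1).
  have := logb b0 bB; rewrite /e; lia.
set f := 61 * (trunc_log 2 s + trunc_log 2 (trunc_log 2 n) + 1) - (15 * e + 16).
have -> : init_regs w c i n s b = mk (fun _ => 0) [:: c; i; n; s; b %% 2^w; t; 0;0;0;0;0;0;0;0;0;0;0;0;0].
  apply: functional_extensionality => r; rewrite /init_regs /mk.
  case: r => [|[|[|[|[|[|r]]]]]] //=; try by rewrite modn_small //; lia.
  rewrite nth_nil mod0n; do 13 (case: r => [|r] //=); by rewrite nth_nil.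
suff H4 : forall beta x7 f', 0 < beta -> beta < 2^w -> (i - 1) %/ beta = q -> q * beta = q * b ->
  exists rg', run w (oracle s T b) prog (15*e+4+f').+4.+4 4
    (mk (fun _ => 0) [:: c; i; n; s; beta; t; 1; x7; 0;0;0;0;0;0;0;0;0;0;0]) = Some rg' /\ rg' 0 = rankB T c i.
  have [Ht|Ht] := eqVneq t 1.
    rewrite (_ : 61 * _ = (15*e+4+f).+4.+4.+4); last by rewrite /f; lia.
    st. rewrite (@modn_small 1) //; last lia. st. rewrite (_ : (t == 1) = true); last by rewrite Ht. st. st.
    rewrite muln1 modn_small; last lia.
    have bn : n <= b by move: tb2; rewrite Ht mul1n; lia.
    have q0 : q = 0 by rewrite /q divn_small //; lia.
    apply: H4; [lia | lia | rewrite q0 divn_small //; lia | by rewrite q0].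
  rewrite (_ : 61 * _ = (15*e+4+(f+1)).+4.+4.+3); last by rewrite /f; lia.
  st. rewrite (@modn_small 1) //; last lia. st. rewrite (negbTE Ht). st.
  have bn : b < n.
    rewrite ltnNge; apply/negP => bn; move/negP: Ht; apply; apply/eqP; nia.
  rewrite modn_small; last lia.
  by apply: H4 => //; lia.
move=> beta x7 f' be0 bew Hq Hqb.
st. rewrite (@modn_small (i - 1)); last lia.
st. rewrite Hq (@modn_small q); last by move: (leq_div (i - 1) b); rewrite -/q; lia.
st. rewrite Hqb (@modn_small (q * b)); last lia.
st. rewrite (@modn_small (i - q * b)) -/j; last lia.
st. rewrite (@modn_small (q + 1)); last by move: (leq_div (i - 1) b); rewrite -/q; lia.
set r := count (blkbit T b c q.+1) (iota 1 j).
have Erk : rankB T c i = rankB T c (b * q) + r.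
  rewrite -rank_split //; congr rankB; rewrite /j; lia.
have rj : r <= j by rewrite /r; apply: leq_trans (count_size _ _) _; rewrite size_iota.
have ri : rankB T c i <= i by rewrite /rankB; apply: leq_trans (count_size _ _) _; rewrite size_iota.
have ER : oracle s T b QR c (q + 1) (q + 1) = rankB T c (b * q).
  by rewrite /= /Rtab -/n -/t kt addn1.
st. rewrite ER (@modn_small (rankB T c (b * q))); last lia.
st. rewrite mod0n.
st. rewrite muln1 (@modn_small j); last lia.
rewrite Erk addn1.
have jw : j < 2 ^ w by lia.
have Rw : rankB T c (b * q) + r < 2 ^ w by lia.
have jd : j - 0 < 2 ^ e.
  rewrite subn0; apply: leq_ltn_trans jb _; exact: trunc_log_ltn.
apply: (@loop w (oracle s T b) c q.+1 j (rankB T c (b*q)) r (fun=> 0) w1 w2 jw rj Rw _ e 0 j f') => //.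
move=> m /andP[m0 mj] /=.
set F := blkbit T b c q.+1.
rewrite (@modn_small (_ + _)); last first.
  apply: leq_ltn_trans W2; by rewrite -[2]/(1+1) leq_add ?leq_b1.
rewrite addn_eq0 !eqb0 -!leqNgt.
apply/andP/idP.
  case=> HS HP.
  have HP2 := leq_trans HP (leq_mod _ _).
  move: HP2; rewrite /prank; case: ifP => FS HP2; last by move: HP2; rewrite leqn0 => /eqP Hm0; move: m0; rewrite Hm0.
  apply: leq_trans HP2 _; exact: count_prefix.
move=> mr.
have [p1 p2 p3 p4] := @sel_prop F b j m jb (introT andP (conj m0 mr)).
rewrite (@modn_small (sel F b m)); last lia.
split => //.
rewrite /prank p3 modn_small //.
apply: leq_ltn_trans jw; apply: leq_trans p2; apply: leq_trans (count_size _ _) _; by rewrite size_iota.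
Qed.
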